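(* For every $n\ge1$, the star graph $G=K_{1,n-1}$ on $n$ vertices satisfies $$a_0(G)<a_1(G)<\cdots<a_{\lfloor\frac{n-1}{2}\rfloor}(G);$$ in particular its $a$-sequence satisfies the tail-peaked condition.
   Context: All graphs are finite simple graphs; $G|_I$ is the induced subgraph on $I\subseteq V(G)$. The signed $a$-number: $sa(\emptyset)=1$; if $G$ has connected components $G_1,\dots,G_\ell$, $sa(G)=\prod_k sa(G_k)$; if $G$ is connected and nonempty, $sa(G)=-\sum_{I\subsetneq V(G)}sa(G|_I)$ when $|V(G)|$ is even and $0$ when odd. $a(G)=|sa(G)|$, $a_i(G)=\sum_{I\subseteq V(G),|I|=2i}a(G|_I)$, and the $a$-sequence is $(a_0(G),a_1(G),\dots)$. A sequence satisfies the tail-peaked condition if it is eventually zero and is (weakly) increasing up to and including its second-to-last nonzero term. The star graph $K_{1,m}$ has one center vertex adjacent to each of $m$ leaves and no other edges. *)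

(* Defs.v *)
From mathcomp Require Import all_boot all_order all_algebra.
Set Implicit Arguments. Unset Strict Implicit. Unset Printing Implicit Defensive.
Import Order.TTheory GRing.Theory Num.Theory.

(* A finite simple graph: vertex finType T with a symmetric irreflexive
   adjacency relation e.  Induced subgraphs G|_I are represented by the
   vertex subset I : {set T}. *)
Definition simple_graph (T : finType) (e : rel T) : Prop :=
  irreflexive e /\ symmetric e.

Section SignedA.
Variables (T : finType) (e : rel T).

Definition induced_rel (I : {set T}) : rel T :=
  [rel x y | [&& x \in I, y \in I & e x y]].

Definition component (I : {set T}) (x : T) : {set T} :=
  [set y in I | connect (induced_rel I) x y].

Definition components (I : {set T}) : {set {set T}} :=
  [set component I x | x in I].

Definition connectedb (I : {set T}) : bool :=
  (I != set0) && [forall x in I, forall y in I, connect (induced_rel I) x y].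

(* signed a-number with fuel; fuel #|I|.+1 suffices since every recursive
   call is on a set of strictly smaller cardinality. *)
Fixpoint saF (k : nat) (I : {set T}) : int :=
  match k with
  | 0 => 1
  | k'.+1 =>
    if I == set0 then 1
    else if connectedb I then
      (if odd #|I| then 0 else - \sum_(J : {set T} | J \proper I) saF k' J)
    else \prod_(C in components I) saF k' C
  end%R.

Definition sa (I : {set T}) : int := saF #|I|.+1 I.

Definition a_num (I : {set T}) : nat := `|sa I|%N.

Definition a_seq (i : nat) : nat :=
  \sum_(I : {set T} | #|I| == i.*2) a_num I.

End SignedA.

(* tail-peaked: eventually zero and weakly increasing up to and including
   the second-to-last nonzero term (index m): s i <= s j whenever i <= j <= m,
   where j <= m iff there are nonzero terms at indices k1 < k2 with j <= k1. *)
Definition tail_peaked (s : nat -> nat) : Prop :=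
  (exists N, forall k, N <= k -> s k = 0) /\
  (forall i j, i <= j ->
     (exists k1 k2, [/\ j <= k1, k1 < k2, s k1 != 0 & s k2 != 0]) ->
     s i <= s j).

Definition star_rel (n : nat) : rel 'I_n :=
  fun x y => (val x == 0) != (val y == 0).
Arguments star_rel n : clear implicits.

Lemma star_simple n : simple_graph (star_rel n).
Proof. by split=> [x|x y]; rewrite /star_rel ?eqxx // eq_sym. Qed.

(* Main.v *)
Require Import Defs.
From mathcomp Require Import all_boot all_order all_algebra.
From mathcomp Require Import zify ring lra.
Set Implicit Arguments. Unset Strict Implicit. Unset Printing Implicit Defensive.
Import Order.TTheory GRing.Theory Num.Theory.
Local Open Scope ring_scope.

Fixpoint sF (f k : nat) : int :=
  match f with
  | 0 => 0
  | f'.+1 => if odd k then - (1 + \sum_(j < k) ('C(k, j))%:Z * sF f' j) else 0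
  end.
Definition s k := sF k.+1 k.

Lemma sF_fuel f f' k : (k < f)%N -> (k < f')%N -> sF f k = sF f' k.
Proof.
elim: f f' k => [//|f IH] [//|f'] k /= kf kf'.
case: (odd k) => //; congr (- (1 + _)); apply: eq_bigr => j _.
by rewrite (IH f') //; apply: leq_trans (ltn_ord j) _.
Qed.

Lemma s_rec k : s k = if odd k then - (1 + \sum_(j < k) ('C(k, j))%:Z * s j) else 0.
Proof.
rewrite /s /=; case: (odd k) => //; congr (- (1 + _)); apply: eq_bigr => j _.
by rewrite /s (sF_fuel (k := j) (f' := j.+1)).
Qed.

Lemma s_even k : ~~ odd k -> s k = 0.
Proof. by rewrite s_rec => /negbTE ->. Qed.

Lemma s_odd k : odd k -> \sum_(j < k.+1) ('C(k, j))%:Z * s (k - j)%N = -1.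
Proof.
move=> ok.
rewrite (reindex_inj rev_ord_inj) /=.
rewrite (eq_bigr (fun i : 'I_k.+1 => ('C(k, i))%:Z * s i)); last first.
  move=> i _; have hi : (i <= k)%N by rewrite -ltnS.
  by rewrite subSS bin_sub // subKn.
rewrite big_ord_recr /= binn (s_rec k) ok; ring.
Qed.
Definition E (u : nat -> int) (N : nat) : {poly rat} :=
  \poly_(i < N) ((u i)%:~R / (i`!)%:R).

Definition eqm (M : nat) (p q : {poly rat}) := forall i, (i < M)%N -> p`_i = q`_i.

Lemma eqm_mul M p p' q q' : eqm M p p' -> eqm M q q' -> eqm M (p * q) (p' * q').
Proof.
move=> hp hq i iM; rewrite !coefM; apply: eq_bigr => j _.
have ji : (j <= i)%N by rewrite -ltnS.
rewrite hp ?hq //; [exact: leq_ltn_trans (leq_subr _ _) iM | exact: leq_ltn_trans ji iM].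
Qed.

Lemma eqm_deriv M p q : eqm M.+1 p q -> eqm M p^`() q^`().
Proof. by move=> h i iM; rewrite !coef_deriv h. Qed.

Lemma eqm_cancel M (C Y : {poly rat}) : C`_0 = 1 -> eqm M (C * Y) 0 -> eqm M Y 0.
Proof.
move=> C0 h i; elim: i {-2}i (leqnn i) => [|i IH] k ki kM.
  move: (h k kM); rewrite coefM; move: ki; rewrite leqn0 => /eqP ->.
  by rewrite big_ord1 C0 mul1r.
case: k ki kM => [|k] ki kM.
  move: (h 0%N kM); rewrite coefM big_ord1 C0 mul1r //.
move: (h k.+1 kM); rewrite coefM big_ord_recl C0 mul1r subn0.
rewrite big1 ?addr0 // => j _; rewrite lift0 /=.
have hj : (k.+1 - j.+1 <= i)%N.
  by rewrite subSS; apply: leq_trans (leq_subr _ _) _; rewrite -ltnS.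
rewrite IH ?coef0 ?mulr0 //; exact: leq_ltn_trans (leq_subr _ _) kM.
Qed.

Lemma fact_neq0 k : (k`!)%:R != 0 :> rat.
Proof. by rewrite pnatr_eq0 -lt0n fact_gt0. Qed.

Lemma coefE u N i : (i < N)%N -> (E u N)`_i = (u i)%:~R / (i`!)%:R.
Proof. by move=> iN; rewrite coef_poly iN. Qed.

Lemma derivE u N i : (i.+1 < N)%N -> (E u N)^`()`_i = (u i.+1)%:~R / (i`!)%:R.
Proof.
move=> iN; rewrite coef_deriv coefE // factS natrM -[_ *+ _]mulr_natr.
have := fact_neq0 i; have : (i.+1)%:R != 0 :> rat by rewrite pnatr_eq0.
move=> h1 h2; field; by rewrite h2 nat1r.
Qed.

Lemma mulE u v N i : (i < N)%N -> (E u N * E v N)`_i =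
  (\sum_(j < i.+1) ('C(i, j))%:Z * u j * v (i - j)%N)%:~R / (i`!)%:R.
Proof.
move=> iN; rewrite coefM rmorph_sum /= mulr_suml; apply: eq_bigr => j _.
have ji : (j <= i)%N by rewrite -ltnS.
rewrite !coefE; [|exact: leq_ltn_trans (leq_subr _ _) iN|exact: leq_ltn_trans ji iN].
have hb := bin_fact ji.
have hb' : ('C(i, j))%:R * ((j`!)%:R * ((i - j)`!)%:R) = (i`!)%:R :> rat.
  by rewrite -!natrM hb.
rewrite !rmorphM /= -hb'.
have := fact_neq0 j; have := fact_neq0 (i - j).
have : ('C(i,j))%:R != 0 :> rat by rewrite pnatr_eq0 -lt0n bin_gt0.
move=> h1 h2 h3.
field; by rewrite h1 h2 h3.
Qed.

Definition cc (k : nat) : int := if odd k then 0 else 1.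
Definition hh (k : nat) : int := if odd k then 1 else 0.

Lemma conv_cc i : \sum_(j < i.+1) ('C(i, j))%:Z * cc j * s (i - j)%N = - hh i.
Proof.
rewrite /hh; case oi: (odd i).
  rewrite -(s_odd oi); apply: eq_bigr => j _; rewrite /cc.
  have ji : (j <= i)%N by rewrite -ltnS.
  case oj: (odd j); last by rewrite mulr1.
  by rewrite s_even ?mulr0 // oddB // oi oj.
rewrite oppr0; apply: big1 => j _; rewrite /cc.
have ji : (j <= i)%N by rewrite -ltnS.
case oj: (odd j); first by rewrite mulr0 mul0r.
by rewrite s_even ?mulr0 // oddB // oi oj.
Qed.

Lemma eqm_weak M M' p q : (M' <= M)%N -> eqm M p q -> eqm M' p q.
Proof. by move=> hM h i iM; apply: h; exact: leq_trans iM hM. Qed.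

Lemma s_prod i : s i.+1 = \sum_(j < i.+1) ('C(i, j))%:Z * s j * s (i - j)%N - (i == 0%N)%:Z.
Proof.
pose N := i.+2; pose C := E cc N; pose S := E s N; pose H := E hh N.
have h1 : eqm N (C * S) (- H).
  move=> k kN; rewrite mulE // conv_cc coefN coefE // rmorphN /= mulNr //.
have h2 : eqm i.+1 C^`() H.
  move=> k kN; rewrite derivE // coefE; last by apply: leq_trans kN _.
  by rewrite /cc /hh /=; case: (odd k).
have h3 : eqm i.+1 H^`() C.
  move=> k kN; rewrite derivE // coefE; last by apply: leq_trans kN _.
  by rewrite /cc /hh /=; case: (odd k).
have h4 : eqm i.+1 (C * (S^`() - S * S + 1)) 0.
  move=> k kM.
  have e1 := eqm_deriv h1 kM.
  rewrite derivM derivN in e1.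
  have e2 := eqm_mul h2 (fun j _ => erefl (S`_j)) kM.
  have e3 := eqm_mul (eqm_weak (leqnSn _) h1) (fun j _ => erefl (S`_j)) kM.
  have e4 := h3 k kM.
  move: e1; rewrite coefD coefN e4 e2 => e1.
  rewrite coef0 mulrDr mulrBr mulrA mulr1 coefD coefB e3 mulNr coefN.
  have -> : (C * S^`())`_k = - C`_k - (H * S)`_k.
    by rewrite -e1; ring.
  ring.
have C0 : C`_0 = 1 by rewrite coefE // /cc /= divr1.
have := eqm_cancel C0 h4 (ltnSn i).
rewrite coef0 !coefD coefN derivE // mulE // coef1 => h.
apply/eqP; rewrite -subr_eq0; apply/eqP.
have hf := fact_neq0 i.
suff : ((s i.+1 - (\sum_(j < i.+1) ('C(i, j))%:Z * s j * s (i - j)%N - (i == 0%N)%:Z))%:~R : rat) = 0.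
  by move/eqP; rewrite intr_eq0 => /eqP.
move: h hf; clear h1 h2 h3 h4 C0 C S H N; case: i => [|i] h hf.
  by rewrite big_ord1 s_rec /= big_ord1 s_even //= !mulr0 !mul0r addr0 subrr.
move: h; rewrite /= addr0 => h.
rewrite subr0 rmorphB /=.
apply: (mulIf (invr_neq0 hf)); rewrite mul0r -h; ring.
Qed.
Lemma half_id i j : (j <= i)%N -> odd j -> odd (i - j) -> (i.+2)./2 = ((j.+1)./2 + ((i-j).+1)./2)%N.
Proof.
move=> ji oj oij.
have e1 := odd_double_half j; have e2 := odd_double_half (i - j).
rewrite oj in e1; rewrite oij in e2.
have -> : i.+2 = (j./2 + (i-j)./2).+2.*2 by lia.
have -> : j.+1 = (j./2).+1.*2 by lia.
have -> : (i - j).+1 = ((i-j)./2).+1.*2 by lia.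
by rewrite !doubleK addnS addSn.
Qed.

Definition t k : int := (-1) ^+ (k.+1)./2 * s k.

Lemma t_even k : ~~ odd k -> t k = 0.
Proof. by move=> h; rewrite /t s_even // mulr0. Qed.

Lemma t1 : t 1 = 1.
Proof. by rewrite /t s_rec /= big_ord1 s_even //= mulr0 addr0 expr1 mulrNN. Qed.

Lemma t_prod i : (0 < i)%N -> t i.+1 = \sum_(j < i.+1) ('C(i, j))%:Z * t j * t (i - j)%N.
Proof.
move=> i0; rewrite /t s_prod; have -> : (i == 0%N) = false by case: i i0.
rewrite subr0 mulr_sumr; apply: eq_bigr => j _.
have ji : (j <= i)%N by rewrite -ltnS.
case oj: (odd j); last by rewrite (s_even (negbT oj)) !(mulr0, mul0r).
case oij: (odd (i - j)%N); last by rewrite (s_even (negbT oij)) !(mulr0, mul0r).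
by rewrite (half_id ji oj oij) exprD; ring.
Qed.

Lemma t_ge0 k : 0 <= t k.
Proof.
elim: k {-2}k (leqnn k) => [|n IH] k kn.
  by move: kn; rewrite leqn0 => /eqP ->; rewrite t_even.
case: k kn => [|k] kn; first by rewrite t_even.
case: k kn => [|k] kn; first by rewrite t1.
rewrite t_prod //; apply: sumr_ge0 => j _.
have ji : (j <= k.+1)%N by rewrite -ltnS.
apply: mulr_ge0; first apply: mulr_ge0 => //.
  by apply: IH; apply: leq_trans ji _; rewrite -ltnS.
by apply: IH; apply: leq_trans (leq_subr _ _) _; rewrite -ltnS.
Qed.
Lemma bin_id k j : (j <= k)%N ->
  ('C(k.+2, j) * ((k.+1 - j) * (k.+2 - j)) = 'C(k, j) * (k.+2 * k.+1))%N.
Proof.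
move=> jk.
have b1 := mul_bin_down k.+2 j; have b2 := mul_bin_down k.+1 j.
rewrite /= in b1 b2.
transitivity ((k.+1 - j) * ((k.+2 - j) * 'C(k.+2, j)))%N; first by ring.
rewrite -b1; transitivity (k.+2 * ((k.+1 - j) * 'C(k.+1, j)))%N; first by ring.
rewrite -b2; ring.
Qed.

Lemma t_bound k : (1 <= k)%N -> (k * k.+1)%:Z * t k.-1 <= 3 * t k.+1.
Proof.
elim: k {-2}k (leqnn k) => [|n IH] k kn k1; first by case: k kn k1.
case: k kn k1 => [//|[|k]] kn _.
  by rewrite /= t_even // mulr0 mulr_ge0 // t_ge0.
rewrite (t_prod (i := k.+2)) //= big_ord_recr big_ord_recr /=.
rewrite subnn (t_even (k := 0)) // mulr0 addr0 subSS subSnn t1 mulr1.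
set R := \sum_(i < k.+1) _.
have hR : (k.+2 * k.+1)%:Z * \sum_(j < k.+1) ('C(k, j))%:Z * t j * t (k - j)%N <= 3 * R.
  rewrite /R !mulr_sumr; apply: ler_sum => j _.
  have jk : (j <= k)%N by rewrite -ltnS.
  have IHj := IH (k.+1 - j)%N.
  have e1 : (k.+1 - j - 1 = k - j)%N by lia.
  have e2 : ((k.+1 - j).+1 = k.+2 - j)%N by lia.
  have e3 : (1 <= k.+1 - j)%N by lia.
  have e4 : (k.+1 - j <= n)%N by apply: leq_trans (leq_subr _ _) _; rewrite -ltnS.
  move: (IHj e4 e3); rewrite e2 -subn1 e1 => h.
  have hb := bin_id jk.
  have tj := t_ge0 j.
  have c0 : (0 <= ('C(k.+2, j))%:Z) by [].
  have : ('C(k.+2, j))%:Z * t j * (((k.+1 - j) * (k.+2 - j))%N%:Z * t (k - j)%N)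
          <= ('C(k.+2, j))%:Z * t j * (3 * t (k.+2 - j)%N).
    by apply: ler_wpM2l => //; apply: mulr_ge0.
  have hb' : ('C(k.+2, j))%:Z * ((k.+1 - j) * (k.+2 - j))%N%:Z = ('C(k, j))%:Z * (k.+2 * k.+1)%N%:Z.
    by rewrite -PoszM hb PoszM.
  move=> H.
  have eL : ((k.+2 * k.+1)%N)%:Z * (('C(k, j))%:Z * t j * t (k - j)%N) =
     ('C(k.+2, j))%:Z * t j * (((k.+1 - j) * (k.+2 - j))%N%:Z * t (k - j)%N).
    transitivity ((('C(k.+2, j))%:Z * ((k.+1 - j) * (k.+2 - j))%N%:Z) * (t j * t (k - j)%N)).
      by rewrite hb'; ring.
    ring.
  have eR : 3 * (('C(k.+2, j))%:Z * t j * t (k.+2 - j)%N) =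
     ('C(k.+2, j))%:Z * t j * (3 * t (k.+2 - j)%N) by ring.
  by rewrite eL eR.
have X0 : 0 <= \sum_(j < k.+1) ('C(k, j))%:Z * t j * t (k - j)%N.
  apply: sumr_ge0 => j _; apply: mulr_ge0; first apply: mulr_ge0 => //; exact: t_ge0.
have tk := t_ge0 k.+1.
case: k {IH kn} R hR X0 tk => [|k] R hR X0 tk.
  rewrite /= in hR *.
  have -> : ('C(2, 1))%:Z = 2 by [].
  move: hR X0; set X := \sum_(_ < _) _ => hR X0.
  have : 0 <= 3 * R by apply: le_trans hR; apply: mulr_ge0.
  by rewrite PoszM; lia.
rewrite -(t_prod (i := k.+1)) // in hR.
have -> : ('C(k.+3, k.+2))%:Z = (k.+3)%:Z by rewrite binSn.
move: hR; rewrite !PoszM => hR.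
rewrite /=; nia.
Qed.
Section Star.
Variable m : nat.
Local Notation T := 'I_m.+1.
Local Notation e := (star_rel m.+1).

Lemma star_e (x y : T) : e x y = (x != ord0) && (y == ord0) || (x == ord0) && (y != ord0).
Proof.
rewrite /star_rel -!val_eqE /=.
by case: (val x == 0)%N; case: (val y == 0)%N.
Qed.

Lemma conn0 (I : {set T}) : ord0 \in I -> connectedb e I.
Proof.
move=> h0; rewrite /connectedb; apply/andP; split.
  by apply/set0Pn; exists ord0.
have c0 x : x \in I -> connect (induced_rel e I) x ord0.
  move=> xI; case: (eqVneq x ord0) => [->|xn0]; first exact: connect0.
  by apply: connect1; rewrite /induced_rel /= xI h0 star_e xn0 eqxx.
apply/forallP => x; apply/implyP => xI; apply/forallP => y; apply/implyP => yI.
apply: connect_trans (c0 x xI) _.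
case: (eqVneq y ord0) => [->|yn0]; first exact: connect0.
by apply: connect1; rewrite /induced_rel /= yI h0 star_e yn0 eqxx.
Qed.

Lemma noconn (I : {set T}) x y : ord0 \notin I -> connect (induced_rel e I) x y -> x = y.
Proof.
move=> h0 /connectP [p hp ->]; case: p hp => [//|z p] /= /andP [hxz _]; exfalso.
move: hxz; rewrite /induced_rel /= star_e => /and3P [xI zI].
case/orP => /andP [hx hz].
  by move: zI; rewrite (eqP hz) (negbTE h0).
by move: xI; rewrite (eqP hx) (negbTE h0).
Qed.


Lemma count0 (I : {set T}) j : ord0 \in I ->
  #|[set J : {set T} | (J \subset I) && (ord0 \in J) && (#|J| == j.+1)]| = 'C(#|I|.-1, j).
Proof.
move=> h0.
have eI : #|I :\ ord0| = #|I|.-1 by rewrite (cardsD1 ord0 I) h0.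
rewrite -eI -cards_draws.
set D' := [set A : {set T} | A \subset I :\ ord0 & #|A| == j].
have n0 J' : J' \in D' -> ord0 \notin J'.
  rewrite inE => /andP [/subsetP sJ _]; apply/negP => h.
  by have := sJ _ h; rewrite !inE eqxx.
rewrite -(@card_in_imset _ _ (fun J => ord0 |: J) D'); last first.
  move=> J1 J2 h1 h2 /= e12.
  by rewrite -(setU1K (n0 _ h1)) e12 setU1K // n0.
congr (#|pred_of_set _|); apply/setP => J; rewrite inE; apply/idP/imsetP.
  case/andP => /andP [sJ jJ] cJ; exists (J :\ ord0); last by rewrite setD1K.
  rewrite inE setSD //=.
  by move: cJ; rewrite (cardsD1 ord0 J) jJ.
move=> [J' hJ' ->]; have nJ := n0 _ hJ'.
move: hJ'; rewrite inE => /andP [sJ cJ].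
rewrite setU11 andbT subUset sub1set h0 /= cardsU1 nJ (eqP cJ) eqxx andbT.
apply: subset_trans sJ _; exact: subD1set.
Qed.


Definition fI (I : {set T}) : int :=
  if I == set0 then 1 else if ord0 \in I then s (#|I|.-1) else 0.

Lemma sum0 (I : {set T}) : ord0 \in I ->
  \sum_(J : {set T} | (J \subset I) && (ord0 \in J)) s (#|J|.-1) =
  \sum_(j < (#|I|.-1).+1) ('C(#|I|.-1, j))%:Z * s j.
Proof.
move=> h0.
rewrite (partition_big (fun J : {set T} => (inord (#|J|.-1) : 'I_(#|I|.-1).+1)) xpredT) //=.
apply: eq_bigr => j _.
set Dj := [set J : {set T} | (J \subset I) && (ord0 \in J) && (#|J| == j.+1)].
transitivity (\sum_(J in Dj) s j).
  apply: eq_big => J.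
    rewrite inE; case sJ: (J \subset I); case jJ: (ord0 \in J) => //=.
    have c1 : (0 < #|J|)%N by apply/card_gt0P; exists ord0.
    have c3 := subset_leq_card sJ.
    have c2 : (#|J|.-1 < (#|I|.-1).+1)%N by lia.
    rewrite -val_eqE /= inordK //; by case: #|J| c1.
  move=> /andP [/andP [sJ jJ] /eqP <-]; rewrite inordK //.
  by rewrite ltnS -!subn1 leq_sub2r // subset_leq_card.
rewrite sumr_const count0 // -mulr_natl.
by rewrite natz.
Qed.

Lemma sum_proper (I : {set T}) : ord0 \in I ->
  \sum_(J : {set T} | J \proper I) fI J = 1 + \sum_(j < #|I|.-1) ('C(#|I|.-1, j))%:Z * s j.
Proof.
move=> h0.
have e1 : \sum_(J : {set T} | J \subset I) fI J = \sum_(J : {set T} | J \proper I) fI J + fI I.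
  rewrite (bigD1 I) //= addrC; congr (_ + _); apply: eq_bigl => J.
  by rewrite properEneq andbC.
have e2 : \sum_(J : {set T} | J \subset I) fI J = \sum_(j < (#|I|.-1).+1) ('C(#|I|.-1, j))%:Z * s j + 1.
  rewrite (bigID (fun J : {set T} => ord0 \in J)) /=; congr (_ + _).
    rewrite -sum0 //; apply: eq_bigr => J /andP [_ jJ].
    rewrite /fI jJ; case: eqP => // J0; by move: jJ; rewrite J0 inE.
  rewrite (bigD1 set0) /=; last by rewrite sub0set inE.
  rewrite big1 ?addr0 //; first by rewrite /fI eqxx.
  move=> J /andP [/andP [_ nj] nJ0]; by rewrite /fI (negbTE nJ0) (negbTE nj).
have e3 : fI I = s (#|I|.-1).
  by rewrite /fI h0; case: eqP => // I0; move: h0; rewrite I0 inE.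
move: e1; rewrite e2 e3 big_ord_recr /= binn => e1.
have -> : \sum_(J : {set T} | J \proper I) fI J = 
   \sum_(i < #|I|.-1) ('C(#|I|.-1, i))%:Z * s i + 1 by
  apply: (addIr (s #|I|.-1)); rewrite -e1; ring.
by rewrite addrC.
Qed.

Lemma saF1 k (x : T) : saF e k.+1 [set x] = 0.
Proof.
rewrite /=; have -> : ([set x] == set0) = false.
  by apply/negbTE/set0Pn; exists x; rewrite inE.
have -> : connectedb e [set x].
  rewrite /connectedb; apply/andP; split; first by apply/set0Pn; exists x; rewrite inE.
  apply/forallP => y; apply/implyP; rewrite inE => /eqP ->.
  apply/forallP => z; apply/implyP; rewrite inE => /eqP ->; exact: connect0.
by rewrite cards1.
Qed.

Lemma saF_eq k (I : {set T}) : (#|I| < k)%N -> saF e k I = fI I.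
Proof.
elim: k I => [//|k IH] I hI /=.
rewrite /fI; case: (I =P set0) => [//|I0].
have [x xI] : exists x, x \in I by apply/set0Pn; apply/eqP.
have cI : (0 < #|I|)%N by apply/card_gt0P; exists x.
case h0: (ord0 \in I).
  rewrite conn0 //.
  case oI: (odd #|I|).
    by rewrite s_even //; move: oI; rewrite -(prednK cI) /=.
  rewrite (eq_bigr fI); last first.
    move=> J; rewrite properEcard => /andP [_ hJ]; apply: IH.
    exact: leq_trans hJ hI.
  rewrite sum_proper // [s (#|I|.-1)]s_rec.
  by move: oI; rewrite -(prednK cI) /= => /negbFE ->.
case cI1: (connectedb e I).
  have eI : I = [set x].
    apply/eqP; rewrite eqEsubset; apply/andP; split; last by rewrite sub1set.
    apply/subsetP => y yI; rewrite inE; apply/eqP.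
    move: cI1 => /andP [_ /forallP /(_ x) /implyP /(_ xI) /forallP /(_ y) /implyP /(_ yI)].
    by move/(noconn (negbT h0)) => ->.
  by rewrite eI cards1.
have cx : component e I x = [set x].
  apply/setP => y; rewrite !inE; apply/andP/eqP => [[_ /(noconn (negbT h0)) ->] //|->].
  by split; [exact: xI | exact: connect0].
rewrite (bigD1 (component e I x)) /=; last by apply: imset_f.
case: k IH hI => [|k] IH hI; first by move: cI hI; case: #|I|.
by rewrite cx saF1 mul0r.
Qed.

Lemma sa_eq (I : {set T}) : sa e I = fI I.
Proof. exact: saF_eq. Qed.

Lemma a_seq0 : a_seq e 0 = 1%N.
Proof.
rewrite /a_seq (bigD1 set0) ?cards0 //= big1 ?addn0.
  by rewrite /a_num sa_eq /fI eqxx absz1.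
by move=> I /andP [/eqP h nI]; move: nI; rewrite -cards_eq0 h eqxx.
Qed.

Lemma abs_t k : `|t k|%N = `|s k|%N.
Proof. by rewrite /t abszM -signr_odd; case: odd; rewrite /= ?mul1n. Qed.

Lemma a_seqS i : a_seq e i.+1 = ('C(m, (i.*2).+1) * `|t (i.*2).+1|)%N.
Proof.
rewrite /a_seq (bigID (fun I : {set T} => ord0 \in I)) /=.
rewrite [X in (_ + X)%N]big1 ?addn0; last first.
  move=> I /andP [/eqP cI nI]; rewrite /a_num sa_eq /fI (negbTE nI).
  case: eqP => // I0; by move: cI; rewrite I0 cards0 doubleS.
rewrite (eq_bigr (fun _ => `|t (i.*2).+1|%N)); last first.
  move=> I /andP [/eqP cI jI]; rewrite /a_num sa_eq /fI jI abs_t.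
  have -> : (I == set0) = false by apply/negbTE/set0Pn; exists ord0.
  by rewrite cI doubleS.
have := count0 (i.*2).+1 (in_setT (@ord0 m)).
rewrite cardsT card_ord /= => <-.
rewrite -sum_nat_const; apply: eq_bigl => I.
by rewrite inE subsetT doubleS andbC.
Qed.
End Star.

Lemma t_pos k : 0 < t (k.*2).+1.
Proof.
elim: k => [|k IH]; first by rewrite t1.
have h := t_bound (k := (k.+1).*2) isT.
rewrite doubleS /= in h *.
have hp : (0 < ((k.*2.+2 * k.*2.+3)%N)%:Z) by [].
have h3 := lt_le_trans (mulr_gt0 hp IH) h.
by rewrite pmulr_rgt0 in h3.
Qed.

Lemma tabs k : t k = (`|t k|%N)%:Z.
Proof. by rewrite abszE ger0_norm // t_ge0. Qed.

Lemma strict m i : (i < m./2)%N ->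
  (a_seq (star_rel m.+1) i < a_seq (star_rel m.+1) i.+1)%N.
Proof.
rewrite gtn_half_double => hm.
case: i hm => [|i] hm.
  rewrite a_seq0 a_seqS /= t1 bin1 muln1; lia.
rewrite !a_seqS doubleS.
set j := (i.*2).+1.
have hj : (j.+2 < m)%N by rewrite /j; move: hm; rewrite doubleS.
have h := t_bound (k := j.+1) isT.
rewrite /= (tabs j) (tabs j.+2) -!PoszM lez_nat in h.
have A1 : (0 < `|t j|%N)%N by rewrite -ltz_nat -tabs t_pos.
have b1 := mul_bin_left m j; have b2 := mul_bin_left m j.+1.
have c0 : (0 < 'C(m, j))%N by rewrite bin_gt0; lia.
set A := `|t j|%N in h A1 *; set B := `|t j.+2|%N in h *.
set C0 := 'C(m, j) in b1 c0 *; set C1 := 'C(m, j.+1) in b1 b2 *; set C2 := 'C(m, j.+2) in b2 *.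
have k1 : (j.+1 * j.+2 * C2 = (m - j) * (m - j.+1) * C0)%N.
  by rewrite -mulnA b2 mulnCA b1 mulnCA mulnA.
have k2 : (6 <= (m - j) * (m - j.+1))%N.
  have : (3 <= m - j)%N by lia.
  have : (2 <= m - j.+1)%N by lia.
  nia.
have k3 : (6 * (C0 * A) <= 3 * (C2 * B))%N.
  apply: (@leq_trans ((m - j) * (m - j.+1) * C0 * A)).
    rewrite mulnA -mulnA [((_ * _) * C0)%N]mulnC mulnA; nia.
  rewrite -k1; nia.
lia.
Qed.

Local Close Scope ring_scope.

Lemma mono (f : nat -> nat) M : (forall i, i < M -> f i < f i.+1) ->
  forall x y, x <= y -> y <= M -> f x <= f y.
Proof.
move=> h x y; elim: y => [|y IH]; first by rewrite leqn0 => /eqP ->.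
rewrite leq_eqVlt => /orP [/eqP -> //| xy] yM.
exact: leq_trans (IH xy (ltnW yM)) (ltnW (h y yM)).
Qed.

Theorem mainTheorem13 (n : nat) : 1 <= n ->
  (forall i, i < (n - 1)./2 ->
     a_seq (star_rel n) i < a_seq (star_rel n) i.+1) /\
  tail_peaked (a_seq (star_rel n)).
Proof.
case: n => [//|m] _; rewrite subn1 /=.
split; first exact: strict m.
split.
  exists m.+2 => k; case: k => [//|k] hk.
  rewrite a_seqS bin_small ?mul0n //; lia.
move=> i j ij [k1 [k2 [jk1 k12 nz1 nz2]]].
case: k2 k12 nz2 => [//|k2] k12 nz2.
have hk2 : k2.*2.+1 <= m.
  move: nz2; rewrite a_seqS; case: (leqP k2.*2.+1 m) => // h.
  by rewrite bin_small.
have hk1 : j <= m./2 by rewrite geq_half_double; lia.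
exact: mono (@strict m) i j ij hk1.
Qed.
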